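(* Let $V$ be a finite set of voters and let $O_1,O_2,\dots,O_k$ be a sequence of delegation operations with pairwise distinct times $t_1<t_2<\dots<t_k$, where each $O_i$ is a pair $(v_i,d_i)$ with $v_i\in V$ and $d_i\in V\cup\{\bot\}$ ($d_i=\bot$ meaning undelegation). For a time $t$, the state graph $G_t$ is the directed graph on $V$ containing, for each voter $v$ having at least one operation at time $<t$, the edge $v\to d$ where $(v,d)$ is the latest such operation, if $d\neq\bot$. The final graph $G$ is $G_{\infty}$; each edge of $G$ carries the time of the operation that produced it. Apply the following deletion procedure to $G$: while $G$ contains a directed cycle, choose a directed cycle and delete its edge with the latest time. Suppose $O_i=(v_i,d_i)$ with $d_i\neq\bot$ is the last operation of voter $v_i$ (so $v_i\to d_i$ is an edge of $G$), and suppose that the graph $G_{t_i}$ together with the edge $v_i\to d_i$ contains no directed cycle through $v_i\to d_i$. Then the edge $v_i\to d_i$ is never deleted by the deletion procedure.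
   Context: Each voter appoints at most one delegate at any time, so every state graph has out-degree at most one at every vertex. The hypothesis on $O_i$ expresses that the voter's delegation, checked against the current delegate graph at the moment it was submitted, did not create a cycle. *)

(* Defs.v *)
From HB Require Import structures.
From mathcomp Require Import all_boot all_order.
Set Implicit Arguments. Unset Strict Implicit. Unset Printing Implicit Defensive.

(* Operations: a sequence ops of pairs (v, d) with d : option V (None = bot).
   The time of the j-th operation is its index j (times are pairwise distinct
   and increasing, only their order matters). *)
Section Deleg.
Variable V : finType.
Definition op := (V * option V)%type.

(* latest delegation of v among operations with time < i (None if none or undelegated) *)
Definition state (ops : seq op) (i : nat) (v : V) : option V :=
  last None [seq o.2 | o <- take i ops & o.1 == v].

Definition graph_at (ops : seq op) (i : nat) : {set V * V} :=
  [set e : V * V | state ops i e.1 == Some e.2].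

Definition final_graph (ops : seq op) : {set V * V} := graph_at ops (size ops).

Definition edge_time (ops : seq op) (e : V * V) : nat :=
  \max_(j < size ops | (nth (e.1, None) ops j).1 == e.1) j.

Definition is_dcycle (E : {set V * V}) (c : seq V) : bool :=
  [&& c != [::], uniq c & cycle (fun x y => (x, y) \in E) c].

Definition del_step (ops : seq op) (E E' : {set V * V}) : Prop :=
  exists c : seq V, is_dcycle E c /\
  exists2 u, u \in c &
    (forall x, x \in c -> edge_time ops (x, next c x) <= edge_time ops (u, next c u)) /\
    E' = E :\ (u, next c u).

Inductive del_reach (ops : seq op) (E : {set V * V}) : {set V * V} -> Prop :=
  | del_refl : del_reach ops E E
  | del_next E1 E2 : del_reach ops E E1 -> del_step ops E1 E2 -> del_reach ops E E2.
End Deleg.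

(* Main.v *)
Require Import Defs.
From mathcomp Require Import all_boot all_order.

Lemma state_stable (V : finType) (ops : seq (V * option V)) i x x0 :
  (forall k, i <= k < size ops -> (nth x0 ops k).1 != x) ->
  state ops i x = state ops (size ops) x.
Proof.
move=> H; rewrite /state take_size.
rewrite -{2}(cat_take_drop i ops) filter_cat.
have -> : [seq o <- drop i ops | o.1 == x] = [::].
  apply/eqP; rewrite -[_ == [::]]negbK -has_filter -all_predC.
  apply/(all_nthP x0) => k; rewrite size_drop => hk /=.
  rewrite nth_drop; apply: H; rewrite leq_addr /=.
  by rewrite -ltn_subRL.
by rewrite cats0.
Qed.

Theorem mainTheorem2 (V : finType) (ops : seq (V * option V)) (i : nat)
    (v d : V) :
  i < size ops ->
  nth (v, None) ops i = (v, Some d) ->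
  (* O_i is the last operation of v *)
  (forall j, i < j < size ops -> (nth (v, None) ops j).1 != v) ->
  (* G_{t_i} plus the edge v -> d has no directed cycle through v -> d *)
  (forall c : seq V, is_dcycle (graph_at ops i :|: [set (v, d)]) c ->
     v \in c -> next c v != d) ->
  (* the edge is never deleted *)
  forall E, del_reach ops (final_graph ops) E -> (v, d) \in E.
Proof.
move=> hi hop hlast hcyc E hE.
suff : E \subset final_graph ops /\ (v, d) \in E by case.
elim: hE => [|E1 E2 _ [sub1 in1] [c [hc [u uc [hmax ->]]]]].
  split=> //.
  rewrite inE /=.
  have <- : state ops i.+1 v = state ops (size ops) v.
    apply: (@state_stable _ _ _ _ (v, None)) => k /andP [k1 k2].
    by apply: hlast; rewrite k1.
  by rewrite /state (take_nth (v, None) hi) filter_rcons hop eqxx map_rcons last_rcons.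
have edv : edge_time ops (v, d) <= i.
  apply/bigmax_leqP => j /= hj; rewrite leqNgt; apply/negP => ij.
  by move: (hlast j); rewrite ij ltn_ord hj => /(_ isT).
split; first by apply: subset_trans sub1; apply: subD1set.
rewrite !inE in1 andbT; apply/negP => /eqP [ev ed].
move: hc => /and3P [cn cu ccyc].
have vc : v \in c by rewrite ev.
have ed2 : next c v = d by rewrite ev.
have := hcyc c; rewrite vc ed2 eqxx => H; suff : false by []; apply: H => //.
rewrite /is_dcycle cn cu /=.
apply: (cycle_from_next cu) => x xc.
have xE : (x, next c x) \in E1 by exact: (next_cycle ccyc xc).
case: (eqVneq x v) => [->|xv].
  by rewrite ed2 !inE eqxx orbT.
rewrite !inE; apply/orP; left.
have := subsetP sub1 _ xE; rewrite !inE /= => hs.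
have tx : edge_time ops (x, next c x) <= i.
  by apply: leq_trans (hmax _ xc) _; rewrite -ev ed2.
rewrite (@state_stable _ _ _ _ (x, None)) // => k /andP [ik ks].
apply/negP => /eqP hk.
have : k <= edge_time ops (x, next c x).
  by apply: (@leq_bigmax_cond _ _ (fun j : 'I_(size ops) => nat_of_ord j) (Ordinal ks)) => /=; rewrite hk.
move=> kt; have ki : k = i by apply/eqP; rewrite eqn_leq ik (leq_trans kt tx).
by move: hk; rewrite ki (set_nth_default (v, None) _ hi) hop /= => hv; rewrite hv eqxx in xv.
Qed.
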